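(* For all integers $n\geq 1$ and $1\le i\le\lfloor n/2\rfloor$, we have $(i+1)\gamma_i(B_{n-1})\le\gamma_i(B_n)$.
   Context: $B_n$ denotes the group of signed permutations: bijections $\sigma$ of $\{\pm1,\dots,\pm n\}$ with $\sigma(-i)=-\sigma(i)$, written $\sigma=\sigma_1\cdots\sigma_n$ with $\sigma_i=\sigma(i)$. With $\sigma_0=0$, $\mathrm{des}_B(\sigma)=|\{i\in\{0,\dots,n-1\}:\sigma_i>\sigma_{i+1}\}|$. The type $B$ Eulerian polynomial $B_n(t)=\sum_{\sigma\in B_n}t^{\mathrm{des}_B(\sigma)}$ satisfies $B_n(t)=t^nB_n(1/t)$, so $B_n(t)=\sum_{i=0}^{\lfloor n/2\rfloor}\gamma_i(B_n)t^i(1+t)^{n-2i}$ for unique integers $\gamma_i(B_n)$; set $\gamma_i(B_n)=0$ for $i>\lfloor n/2\rfloor$. *)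

(* Defs.v *)
From HB Require Import structures.
From mathcomp Require Import all_boot all_order all_fingroup all_algebra.
From Stdlib Require Import ClassicalEpsilon.
Set Implicit Arguments. Unset Strict Implicit. Unset Printing Implicit Defensive.
Import Order.TTheory GRing.Theory Num.Theory.
Local Open Scope ring_scope.

(* The signed letters {±1,...,±n}: (k, b) encodes -(k+1) if b, else k+1. *)
Definition letter (n : nat) := ('I_n * bool)%type.

Definition letter_val (n : nat) (x : letter n) : int :=
  if x.2 then - (x.1.+1)%:Z else (x.1.+1)%:Z.

Definition letter_neg (n : nat) (x : letter n) : letter n := (x.1, ~~ x.2).

Definition Bn (n : nat) : {set {perm letter n}} :=
  [set s : {perm letter n} | [forall x : letter n, s (letter_neg x) == letter_neg (s x)]].

Definition sigmaB (n : nat) (s : {perm letter n}) (j : nat) : int :=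
  match j with
  | 0 => 0
  | j'.+1 => match (insub j' : option 'I_n) with
             | Some k => letter_val (s (k, false))
             | None => 0
             end
  end.

Definition desB (n : nat) (s : {perm letter n}) : nat :=
  #|[set i : 'I_n | sigmaB s (val i).+1 < sigmaB s (val i)]|.

Definition BEuler (n : nat) : {poly int} :=
  \sum_(s in Bn n) 'X^(desB s).

Definition is_gamma_vector (n : nat) (g : nat -> int) : Prop :=
  (forall i, (n./2 < i)%N -> g i = 0) /\
  BEuler n = \sum_(i < n./2.+1) (g i)%:P * ('X^i * (1 + 'X) ^+ (n - 2 * i)).

Definition gammaB (n : nat) : nat -> int :=
  epsilon (inhabits (fun _ : nat => 0 : int)) (is_gamma_vector n).

(* Main.v *)
Require Import Defs.
From mathcomp Require Import all_boot all_order all_fingroup all_algebra.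
Import Order.TTheory GRing.Theory Num.Theory.
Local Open Scope ring_scope.
Set Warnings "-notation-overridden,-ambiguous-paths".
From mathcomp Require Import ring zify.
From Stdlib Require Import ClassicalEpsilon.
Set Implicit Arguments. Unset Strict Implicit. Unset Printing Implicit Defensive.


Definition Tn (n : nat) (p : {poly int}) : {poly int} :=
  (1 + (2 * n + 1)%N%:R * 'X) * p + 2%:R * (1 - 'X) * ('X * p^`()).

Lemma Tn_sum n (I : Type) (r : seq I) (F : I -> {poly int}) :
  Tn n (\sum_(i <- r) F i) = \sum_(i <- r) Tn n (F i).
Proof.
elim: r => [|a r IH]; rewrite ?big_nil ?big_cons.
  by rewrite /Tn deriv0 !mulr0 addr0.
by rewrite -IH /Tn derivD !mulrDr addrACA.
Qed.


Lemma X_derivXn (k : nat) : 'X * ('X^k)^`() = k%:R * 'X^k :> {poly int}.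
Proof.
rewrite derivXn; case: k => [|k]; first by rewrite mulr0n mulr0 mul0r.
by rewrite /= mulrnAr -exprS mulr_natl.
Qed.

Fixpoint gN (n i : nat) : nat :=
  match n with
  | 0 => (i == 0)%N
  | n'.+1 => match i with
             | 0 => gN n' 0
             | j.+1 => (2 * j + 3) * gN n' j.+1 + 4 * (n' - 2 * j) * gN n' j
             end
  end%N.

Lemma gN_zero n i : (n./2 < i)%N -> gN n i = 0%N.
Proof.
elim: n i => [|n IH] [|i] //= H.
have E := odd_double_half n.
rewrite uphalf_half in H.
move: E H; case: (odd n) => /= E H; rewrite -?muln2 in E.
  rewrite IH; last by lia.
  have -> : (n - 2 * i = 0)%N by lia.
  by rewrite !muln0.
rewrite IH; last by lia.
have -> : (n - 2 * i = 0)%N by lia.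
by rewrite !muln0.
Qed.

Lemma Tn_mono n i : (2 * i <= n)%N ->
  Tn n ('X^i * (1 + 'X) ^+ (n - 2 * i)) =
  (2 * i + 1)%N%:R * ('X^i * (1 + 'X) ^+ (n.+1 - 2 * i)) +
  (4 * (n - 2 * i))%N%:R * ('X^(i.+1) * (1 + 'X) ^+ (n.+1 - 2 * i.+1)).
Proof.
move=> le2i.
have [r Hr] : exists r, n = (2 * i + r)%N by exists (n - 2 * i)%N; lia.
subst n.
have -> : (2 * i + r - 2 * i = r)%N by lia.
have -> : ((2 * i + r).+1 - 2 * i = r.+1)%N by lia.
have hQ : ((1 + 'X) ^+ r)^`() = r%:R * (1 + 'X) ^+ r.-1 :> {poly int}.
  by rewrite deriv_exp derivD derivC derivX add0r mul1r mulr_natl.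
have hD : 'X * ('X^i * (1 + 'X) ^+ r)^`() =
   i%:R * 'X^i * (1 + 'X) ^+ r + r%:R * 'X * 'X^i * (1 + 'X) ^+ r.-1 :> {poly int}.
  rewrite derivM mulrDr mulrA X_derivXn hQ; ring.
rewrite /Tn hD; clear le2i hD hQ.
case: r => [|r].
  rewrite !addn0 muln0 /= expr1 expr0 !mul0r !addr0 !mulr1; ring.
have -> : ((2 * i + r.+1).+1 - 2 * i.+1 = r)%N by lia.
rewrite /= [(1 + 'X) ^+ r.+2]exprS [(1 + 'X) ^+ r.+1]exprS exprS.
ring.
Qed.

Lemma Tn_natM n k p : Tn n (k%:R * p) = k%:R * Tn n p.
Proof.
rewrite /Tn.
have -> : (k%:R * p)^`() = k%:R * p^`() by rewrite !mulr_natl derivMn.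
ring.
Qed.

Definition Gam n : {poly int} :=
  \sum_(0 <= i < n.+1) (gN n i)%:R * ('X^i * (1 + 'X) ^+ (n - 2 * i)).

Lemma Gam_step n : Tn n (Gam n) = Gam n.+1.
Proof.
rewrite /Gam Tn_sum.
under eq_bigr => i _ do rewrite Tn_natM.
have E : forall i, (gN n i)%:R * Tn n ('X^i * (1 + 'X) ^+ (n - 2 * i)) =
   ((2 * i + 1) * gN n i)%N%:R * ('X^i * (1 + 'X) ^+ (n.+1 - 2 * i)) +
   (4 * (n - 2 * i) * gN n i)%N%:R * ('X^(i.+1) * (1 + 'X) ^+ (n.+1 - 2 * i.+1)).
  move=> i; case: (leqP (2 * i) n) => H.
    rewrite Tn_mono // !natrM; ring.
  rewrite gN_zero; last first.
    have := odd_double_half n; case: (odd n) => /= E; rewrite -?muln2 in E; lia.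
  rewrite !muln0 !mul0r; ring.
under eq_bigr => i _ do rewrite E.
rewrite big_split /=.
rewrite [in RHS]big_nat_recl //=.
under [X in _ = _ + X]eq_bigr => i _ do rewrite natrD mulrDl.
rewrite big_split /= addrA.
congr (_ + _).
have -> : \sum_(0 <= i < n.+1)
   ((2 * i + 1) * gN n i)%N%:R * ('X^i * (1 + 'X) ^+ (n.+1 - 2 * i)) =
   \sum_(0 <= i < n.+2)
   ((2 * i + 1) * gN n i)%N%:R * ('X^i * (1 + 'X) ^+ (n.+1 - 2 * i)) :> {poly int}.
  rewrite [in RHS]big_nat_recr //= (@gN_zero n n.+1); last first.
    have := odd_double_half n; case: (odd n) => /= E'; rewrite -?muln2 in E'; lia.
  by rewrite muln0 mul0r addr0.
rewrite [in LHS]big_nat_recl // muln0 add0n mul1n subn0.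
congr (_ + _); apply: eq_bigr => i _.
by rewrite (_ : (2 * i.+1 + 1 = 2 * i + 3)%N); last lia.
Qed.

Lemma gamma_unique n g1 g2 :
  is_gamma_vector n g1 -> is_gamma_vector n g2 -> forall k, g1 k = g2 k.
Proof.
move=> [z1 E1] [z2 E2].
have H0 : \sum_(i < n./2.+1) (g1 i - g2 i)%:P * ('X^i * (1 + 'X) ^+ (n - 2 * i)) = 0.
  apply: (etrans _ (subrr (BEuler n))).
  rewrite {1}E1 E2 -sumrB; apply: eq_bigr => i _.
  by rewrite polyCB mulrBl.
move=> k; apply/eqP; rewrite -subr_eq0; apply/eqP.
elim/ltn_ind: k => k IH.
case: (ltnP n./2 k) => Hk; first by rewrite z1 // z2 // subrr.
have Hk' : (k < n./2.+1)%N by [].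
have := congr1 (fun p : {poly int} => p`_k) H0.
rewrite coef0 coef_sum (bigD1 (Ordinal Hk')) //= big1 ?addr0.
  rewrite coefCM coefXnM ltnn subnn -horner_coef0 horner_exp hornerD hornerC hornerX.
  by rewrite addr0 expr1n mulr1.
move=> i /eqP Hne; rewrite coefCM coefXnM.
case: ltnP => Hik; first by rewrite mulr0.
have Hik2 : (i < k)%N.
  rewrite ltn_neqAle Hik andbT; apply/eqP => Heq; apply: Hne; exact: val_inj.
by rewrite IH // mul0r.
Qed.

Lemma Gam_gamma n : BEuler n = Gam n -> is_gamma_vector n (fun i => (gN n i)%:Z).
Proof.
move=> HB; split; first by move=> i Hi; rewrite gN_zero.
rewrite HB /Gam big_mkord.
have Hle : (n./2.+1 <= n.+1)%N by rewrite ltnS; have := odd_double_half n; lia.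
rewrite (big_ord_widen _ (fun i => ((gN n i)%:Z)%:P * ('X^i * (1 + 'X) ^+ (n - 2 * i))) Hle).
rewrite [in RHS]big_mkcond; apply: eq_bigr => i _.
case: ifP => Hi.
  by rewrite -natz polyC_natr.
rewrite gN_zero //; last by rewrite ltnNge -ltnS Hi.
by rewrite mul0r.
Qed.



Fixpoint desL (a : int) (w : seq int) : nat :=
  if w is x :: w' then (nat_of_bool (x < a)%R + desL x w')%N else 0%N.

Definition ins (w : seq int) (j : nat) (x : int) := take j w ++ x :: drop j w.

Definition sgm (b : bool) (m : nat) : int := if b then - (m%:Z) else m%:Z.

Lemma ins_sum (m : nat) (a : int) (w : seq int) :
  all (fun x => (- (m%:Z) < x < m%:Z)) (a :: w) ->
  \sum_(j <- iota 0 (size w).+1) \sum_(b <- [:: true; false])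
      'X^(desL a (ins w j (sgm b m))) + (2 * desL a w)%N%:R * 'X^((desL a w).+1)
  = (2 * desL a w + 1)%N%:R * 'X^(desL a w) + (2 * size w + 1)%N%:R * 'X^((desL a w).+1)
  :> {poly int}.
Proof.
elim: w a => [|x w IH] a.
  move=> /andP [/andP [h1 h2] _] /=.
  rewrite big_cons big_nil !big_cons big_nil /ins /= /sgm h1 ltNge (ltW h2) /=.
  rewrite !addn0 !muln0 !mul0r !addr0 expr0 expr1; ring.
move=> /andP [/andP [ha1 ha2] /andP [/andP [hx1 hx2] hw]].
have hxw : all (fun y => - (m%:Z) < y < m%:Z) (x :: w).
  by apply/andP; split => //; apply/andP.
have IHx := IH x hxw.
set S' := \sum_(j <- _) _ in IHx.
have IH' : S' = (2 * desL x w + 1)%N%:R * 'X^(desL x w) +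
   (2 * size w + 1)%N%:R * 'X^((desL x w).+1) - (2 * desL x w)%N%:R * 'X^((desL x w).+1).
  by rewrite -IHx addrK.
have Hi : iota 0 (size w).+2 = 0%N :: map (addn 1) (iota 0 (size w).+1).
  by rewrite -iotaDl.
rewrite Hi big_cons big_map.
under eq_bigr => j _ do rewrite add1n.
rewrite /= [X in X + _ = _]/= .
have E : \sum_(i <- iota 0 (size w).+1)
     \sum_(b <- [:: true; false]) 'X^(desL a (ins (x :: w) i.+1 (sgm b m))) =
     'X^(nat_of_bool (x < a)%R) * S' :> {poly int}.
  rewrite /S' big_distrr /=; apply: eq_bigr => j _.
  rewrite big_distrr /=; apply: eq_bigr => b _.
  by rewrite /ins /= -exprD.
rewrite E IH' !big_cons big_nil /ins /= /sgm.
have f1 : (x < - (m%:Z)) = false by apply/negbTE; rewrite -leNgt ltW.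
have f2 : ((m%:Z) < a) = false by apply/negbTE; rewrite -leNgt ltW.
rewrite ha1 hx2 f1 f2 /=.
move: (desL x w) (size w) => k s; case: (x < a) => /=.
  rewrite !add0n !add1n !addr0 !exprS; ring.
rewrite !add0n !add1n !addr0 !exprS ?expr0; ring.
Qed.

Definition valid n (w : seq int) := (size w == n) && perm_eq (map absz w) (iota 1 n).

Fixpoint L (n : nat) : seq (seq int) :=
  match n with
  | 0 => [:: [::]]
  | n'.+1 => [seq ins p.1 p.2.1 (sgm p.2.2 n'.+1) |
              p <- [seq (w, jb) | w <- L n',
                     jb <- [seq (j, b) | j <- iota 0 n'.+1, b <- [:: true; false]]]]
  end.

Lemma L_S n : L n.+1 = [seq ins p.1 p.2.1 (sgm p.2.2 n.+1) |
              p <- [seq (w, jb) | w <- L n,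
                     jb <- [seq (j, b) | j <- iota 0 n.+1, b <- [:: true; false]]]].
Proof. by []. Qed.

Lemma ins_perm w j x : perm_eq (ins w j x) (x :: w).
Proof.
rewrite /ins -[in X in perm_eq _ X](cat_take_drop j w) -cat1s.
by rewrite perm_catCA.
Qed.

Lemma iotaS1 n : perm_eq (iota 1 n.+1) (n.+1 :: iota 1 n).
Proof.
have -> : iota 1 n.+1 = iota 1 n ++ [:: n.+1] by have := iotaD 1 n 1; rewrite addn1 add1n.
by rewrite perm_catC.
Qed.

Lemma abs_sgm b m : absz (sgm b m) = m.
Proof. by case: b; rewrite /sgm ?abszN. Qed.

Lemma valid_abs n w y : valid n w -> y \in w -> (0 < absz y <= n)%N.
Proof.
move=> /andP [_ hp] hy.
have : absz y \in iota 1 n by rewrite -(perm_mem hp); apply: map_f.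
by rewrite mem_iota; lia.
Qed.

Lemma L_valid n w : w \in L n -> valid n w.
Proof.
elim: n w => [|n IH] w.
  by rewrite inE => /eqP ->.
move=> /mapP [[u [j b]] /allpairsP [[u' jb] [/= Hu _ [= Hu' Hjb]]] ->] /=; subst u' jb.
have /andP [/eqP hs hp] := IH _ Hu.
have hper := ins_perm u j (sgm b n.+1).
apply/andP; split.
  by rewrite (perm_size hper) /= hs.
rewrite (permPl (perm_map absz hper)) /= abs_sgm.
by rewrite perm_sym (permPl (iotaS1 n)) perm_cons perm_sym.
Qed.

Lemma int_abs_sgm (x : int) m : absz x = m -> x = sgm (x < 0) m.
Proof.
case: x => k /= <-; first by [].
by rewrite NegzE /sgm.
Qed.

Lemma valid_L n w : valid n w -> w \in L n.
Proof.
elim: n w => [|n IH] w.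
  by move=> /andP [/eqP /size0nil -> _]; rewrite inE.
move=> Hv; have /andP [/eqP hs hp] := Hv.
pose p := (fun y : int => absz y == n.+1).
have hh : has p w.
  apply/hasP; have : n.+1 \in map absz w by rewrite (perm_mem hp) mem_iota; lia.
  by move=> /mapP [y hy hy']; exists y => //; rewrite /p -hy'.
set j := find p w.
have hj : (j < size w)%N by rewrite -has_find.
set x := nth 0 w j.
have hx : absz x = n.+1 by apply/eqP; exact: (nth_find 0 hh).
set u := take j w ++ drop j.+1 w.
have hwu : w = ins u j x.
  rewrite /ins /u take_size_cat ?size_takel //; last exact: ltnW.
  rewrite drop_size_cat ?size_takel //; last exact: ltnW.
  by rewrite /x -drop_nth // cat_take_drop.
have hper := ins_perm u j x; rewrite -hwu in hper.
have hvu : valid n u.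
  apply/andP; split.
    by have := perm_size hper; rewrite hs /= => -[->].
  have h1 := perm_map absz hper; rewrite /= hx in h1.
  have h2 : perm_eq (n.+1 :: map absz u) (n.+1 :: iota 1 n).
    by rewrite -(permPl h1) (permPl hp) iotaS1.
  by rewrite perm_cons in h2.
apply/mapP; exists (u, (j, x < 0)).
  apply: allpairs_f; first exact: IH.
  apply: allpairs_f; first by rewrite mem_iota; lia.
  by case: (x < 0).
by rewrite /= -int_abs_sgm.
Qed.

Lemma find_ins m u j x : (j <= size u)%N -> absz x = m ->
  all (fun y : int => absz y != m) u ->
  find (fun y : int => absz y == m) (ins u j x) = j.
Proof.
move=> hj hx hu.
rewrite /ins find_cat size_takel //.
have -> : has (fun y : int => absz y == m) (take j u) = false.
  apply/negbTE/hasPn => y hy.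
  by move/allP: hu => /(_ y (mem_take hy)).
by rewrite /= hx eqxx addn0.
Qed.

Lemma ins_inj m u1 u2 j1 j2 x1 x2 :
  (j1 <= size u1)%N -> (j2 <= size u2)%N -> absz x1 = m -> absz x2 = m ->
  all (fun y : int => absz y != m) u1 -> all (fun y : int => absz y != m) u2 ->
  ins u1 j1 x1 = ins u2 j2 x2 -> [/\ u1 = u2, j1 = j2 & x1 = x2].
Proof.
move=> h1 h2 hx1 hx2 hu1 hu2 E.
have ej : j1 = j2 by rewrite -(find_ins h1 hx1 hu1) -(find_ins h2 hx2 hu2) E.
subst j2.
have ex : x1 = x2.
  have := congr1 (fun s => nth 0 s j1) E.
  by rewrite /ins !nth_cat (size_takel h1) (size_takel h2) ltnn subnn.
subst x2.
have et : take j1 u1 = take j1 u2.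
  have := congr1 (take j1) E.
  by rewrite /ins (take_size_cat _ (size_takel h1)) (take_size_cat _ (size_takel h2)).
have ed : drop j1 u1 = drop j1 u2.
  have := congr1 (drop j1.+1) E.
  rewrite /ins -addn1 !drop_cat !size_takel // ltnNge leq_addr /= addKn /= !drop0.
  by [].
split => //.
by rewrite -(cat_take_drop j1 u1) et ed cat_take_drop.
Qed.

Lemma valid_notin n u : valid n u -> all (fun y : int => absz y != n.+1) u.
Proof.
move=> hv; apply/allP => y hy; have := valid_abs hv hy; lia.
Qed.

Lemma sgm_inj b1 b2 m : sgm b1 m.+1 = sgm b2 m.+1 -> b1 = b2.
Proof. by rewrite /sgm; case: b1; case: b2 => // hb; exfalso; move: hb; lia. Qed.

Lemma L_uniq n : uniq (L n).
Proof.
elim: n => [//|n IH]; rewrite L_S.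
rewrite map_inj_in_uniq.
  apply: allpairs_uniq => //.
    apply: allpairs_uniq => //; first exact: iota_uniq.
    by move=> [a b] [c d] _ _.
  by move=> [a b] [c d] _ _.
move=> [u1 [j1 b1]] [u2 [j2 b2]] /allpairsP [[u1' jb1] [Hu1 Hjb1 [= Hu1' Hjb1']]].
move=> /allpairsP [[u2' jb2] [Hu2 Hjb2 [= Hu2' Hjb2']]]; subst u1' u2' jb1 jb2.
move: Hjb1 Hjb2 => /allpairsP [[j1' b1'] [hj1 _ [= ? ?]]].
move=> /allpairsP [[j2' b2'] [hj2 _ [= ? ?]]]; subst j1' j2' b1' b2' => /=.
have hv1 := L_valid Hu1; have hv2 := L_valid Hu2.
move: (hv1) (hv2) => /andP [/eqP hs1 _] /andP [/eqP hs2 _].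
rewrite mem_iota in hj1; rewrite mem_iota in hj2.
move: hs1 hs2 hj1 hj2 => /= hs1 hs2 hj1 hj2.
move=> E.
have [] := ins_inj _ _ (abs_sgm b1 n.+1) (abs_sgm b2 n.+1) (valid_notin hv1) (valid_notin hv2) E.
- by rewrite hs1; lia.
- by rewrite hs2; lia.
move=> eu ej hb; rewrite /= in eu; rewrite eu ej; congr (_, (_, _)).
exact: sgm_inj hb.
Qed.


Definition BL n : {poly int} := \sum_(w <- L n) 'X^(desL 0 w).

Lemma Tn_X n k : Tn n 'X^k + (2 * k)%N%:R * 'X^(k.+1) =
  (2 * k + 1)%N%:R * 'X^k + (2 * n + 1)%N%:R * 'X^(k.+1).
Proof. rewrite /Tn X_derivXn exprS; ring. Qed.

Lemma BL_S n : BL n.+1 = Tn n (BL n).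
Proof.
rewrite /BL L_S big_map big_allpairs Tn_sum big_seq [RHS]big_seq.
apply: eq_bigr => u hu.
rewrite big_allpairs /=.
have hv := L_valid hu; move: (hv) => /andP [/eqP hs _].
have hb : all (fun x => (- ((n.+1)%:Z) < x < (n.+1)%:Z)) (0 :: u).
  apply/allP => y; rewrite inE => /orP [/eqP -> | hy]; first by [].
  have := valid_abs hv hy => hy'; apply/andP; split; lia.
have := ins_sum hb; rewrite hs -(Tn_X n) => /addIr.
by [].
Qed.

Lemma BL0 : BL 0 = 1.
Proof. by rewrite /BL big_cons big_nil /= expr0 addr0. Qed.


Definition word n (s : {perm letter n}) : seq int := mkseq (fun j => sigmaB s j.+1) n.

Lemma sigmaB_ord n (s : {perm letter n}) (k : 'I_n) :
  sigmaB s k.+1 = letter_val (s (k, false)).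
Proof. by rewrite /sigmaB valK. Qed.

Lemma nth_word n (s : {perm letter n}) j : (j <= n)%N ->
  nth 0 (0 :: word s) j = sigmaB s j.
Proof.
case: j => [//|j] hj /=.
by rewrite /word nth_mkseq.
Qed.

Lemma desL_count a w : desL a w =
  count (fun j => nth 0 (a :: w) j.+1 < nth 0 (a :: w) j) (iota 0 (size w)).
Proof.
elim: w a => [//|x w IH] a.
rewrite /= IH.
have -> : iota 1 (size w) = map (addn 1) (iota 0 (size w)) by rewrite -iotaDl.
by rewrite count_map.
Qed.

Lemma desB_word n (s : {perm letter n}) : desB s = desL 0 (word s).
Proof.
rewrite desL_count /word size_mkseq /desB cardE /enum_mem size_filter -enumT.
rewrite -val_enum_ord count_map; apply: eq_count => k.
rewrite /preim inE (nth_word s (ltn_ord k)) (nth_word s (ltnW (ltn_ord k))); exact: (in_set (fun i : 'I_n => sigmaB s (val i).+1 < sigmaB s (val i)) k).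
Qed.

Lemma BnP n (s : {perm letter n}) :
  s \in Bn n -> forall x, s (letter_neg x) = letter_neg (s x).
Proof. by rewrite inE => /forallP H x; apply/eqP. Qed.

Lemma abs_letter_val n (l : letter n) : absz (letter_val l) = (val l.1).+1.
Proof. by rewrite /letter_val; case: l.2; rewrite ?abszN. Qed.

Lemma letter_val_inj n : injective (@letter_val n).
Proof.
move=> [a1 b1] [a2 b2]; rewrite /letter_val /=.
case: b1; case: b2 => /= H.
- have ha : nat_of_ord a1 = nat_of_ord a2 by lia.
  by rewrite (@val_inj _ _ _ a1 a2 ha).
- exfalso; lia.
- exfalso; lia.
- have ha : nat_of_ord a1 = nat_of_ord a2 by lia.
  by rewrite (@val_inj _ _ _ a1 a2 ha).
Qed.

Lemma word_inj n : {in Bn n &, injective (@word n)}.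
Proof.
move=> s1 s2 h1 h2 E; apply/permP => -[k b].
have ef : s1 (k, false) = s2 (k, false).
  apply: letter_val_inj; rewrite -!sigmaB_ord.
  have := congr1 (fun w => nth 0 (0 :: w) k.+1) E.
  by rewrite !nth_word.
case: b => //.
have -> : ((k, true) : letter n) = letter_neg (k, false) by [].
by rewrite (BnP h1) (BnP h2) ef.
Qed.

Lemma word_valid n (s : {perm letter n}) : s \in Bn n -> valid n (word s).
Proof.
move=> hs; apply/andP; split; first by rewrite size_mkseq.
pose pi := fun k : 'I_n => (s (k, false)).1.
have pi_inj : injective pi.
  move=> k1 k2; rewrite /pi => E.
  case E2 : ((s (k1, false)).2 == (s (k2, false)).2).
    have : s (k1, false) = s (k2, false).
      by move: E E2; case: (s (k1, false)) => a b; case: (s (k2, false)) => c d /= -> /eqP ->.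
    by move/perm_inj => [].
  have : s (k1, false) = s (k2, true).
    have -> : ((k2, true) : letter n) = letter_neg (k2, false) by [].
    rewrite (BnP hs); move: E E2; case: (s (k1, false)) => a b; case: (s (k2, false)) => c d /= -> /negbT.
    by rewrite /letter_neg /=; case: b; case: d.
  by move/perm_inj.
have hperm : perm_eq (map pi (enum 'I_n)) (enum 'I_n).
  apply: uniq_perm; first by rewrite map_inj_uniq ?enum_uniq.
    exact: enum_uniq.
  move=> y; rewrite mem_enum -codomE; apply: inj_card_onto => //.
have -> : map absz (word s) = map (fun k : 'I_n => (val k).+1) (map pi (enum 'I_n)).
  rewrite /word /mkseq -val_enum_ord -!map_comp; apply: eq_map => k /=.
  by rewrite valK abs_letter_val.
rewrite (permPl (perm_map _ hperm)).
by rewrite (map_comp succn val) val_enum_ord -(iotaDl 1 0).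
Qed.

Lemma int_signE (v : int) : (0 < absz v)%N ->
  (if v < 0 then - ((absz v)%:Z) else (absz v)%:Z) = v.
Proof. by case: v => a //= _; rewrite NegzE. Qed.

Lemma word_surj n w : valid n w -> exists2 s, s \in Bn n & word s = w.
Proof.
move=> hv; move: (hv) => /andP [/eqP hs hp].
pose f := fun x : letter n =>
  ((odflt x.1 (insub (absz (nth 0 w x.1)).-1) : 'I_n), x.2 (+) (nth 0 w x.1 < 0)).
have hin : forall k : 'I_n, nth 0 w k \in w.
  by move=> k; apply: mem_nth; rewrite hs.
have fst_val : forall x, val (f x).1 = (absz (nth 0 w x.1)).-1.
  move=> x; rewrite /f /=; case: insubP => [o _ -> //|/negP H]; exfalso; apply: H.
  by have := valid_abs hv (hin x.1); case: (absz _) => [|a] /=; lia.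
have f_inj : injective f.
  move=> x y E.
  have e1 : absz (nth 0 w x.1) = absz (nth 0 w y.1).
    have := congr1 (fun z => val z.1) E; rewrite !fst_val.
    have := valid_abs hv (hin x.1); have := valid_abs hv (hin y.1); lia.
  have e2 : x.1 = y.1.
    apply: ord_inj; apply/eqP.
    have hu : uniq (map absz w) by rewrite (perm_uniq hp) iota_uniq.
    rewrite -(nth_uniq 0%N _ _ hu) ?size_map ?hs //.
    by rewrite !(nth_map 0) ?hs // e1.
  move: E; rewrite /f e2; clear e1; case: x y e2 => [a b] [c d] /= -> [].
  by case: b; case: d; case: (nth 0 w c < 0).
pose s := perm f_inj.
exists s.
  rewrite inE; apply/forallP => x; apply/eqP.
  by rewrite !permE /f /letter_neg /= addNb.
apply: (@eq_from_nth _ 0); first by rewrite size_mkseq hs.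
move=> j; rewrite size_mkseq => hj.
rewrite /word nth_mkseq // -[j]/(val (Ordinal hj)) sigmaB_ord permE.
set k := Ordinal hj.
have hk := valid_abs hv (hin k).
rewrite /letter_val /=.
have -> : (val (f (k, false)).1).+1 = absz (nth 0 w k) by rewrite fst_val /= prednK //; case/andP: hk.
by rewrite int_signE //; case/andP: hk.
Qed.

Lemma BEuler_BL n : BEuler n = BL n.
Proof.
rewrite /BEuler /BL -big_enum /=.
under eq_bigr => s _ do rewrite desB_word.
rewrite -(big_map (@word n) xpredT (fun w => 'X^(desL 0 w))).
apply: perm_big; apply: uniq_perm.
- rewrite map_inj_in_uniq ?enum_uniq //.
  by move=> s1 s2; rewrite !mem_enum; apply: word_inj.
- exact: L_uniq.
move=> w; apply/idP/idP.
  by move=> /mapP [s]; rewrite mem_enum => hs ->; apply: valid_L; apply: word_valid.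
move=> /L_valid /word_surj [s hs <-].
by apply: map_f; rewrite mem_enum.
Qed.

Lemma BEuler0 : BEuler 0 = 1.
Proof. by rewrite BEuler_BL BL0. Qed.

Lemma BEulerS n : BEuler n.+1 = Tn n (BEuler n).
Proof. by rewrite !BEuler_BL BL_S. Qed.

Lemma BEuler_Gam n : BEuler n = Gam n.
Proof.
elim: n => [|n IH].
  by rewrite BEuler0 /Gam big_nat1 /= !expr0 !mul1r.
by rewrite BEulerS IH Gam_step.
Qed.

Lemma gammaB_gN n i : gammaB n i = (gN n i)%:Z.
Proof.
have H := Gam_gamma (BEuler_Gam n).
have H2 : is_gamma_vector n (gammaB n).
  by rewrite /gammaB; apply: epsilon_spec; exists (fun i => (gN n i)%:Z).
exact: gamma_unique H2 H i.
Qed.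

Theorem lemma2p4 (n i : nat) :
  (1 <= n)%N -> (1 <= i <= n./2)%N ->
  (i.+1)%:Z * gammaB n.-1 i <= gammaB n i.
Proof.
case: n => [//|m] _ /andP [Hi _] /=.
rewrite !gammaB_gN -PoszM lez_nat.
case: i Hi => [//|j] _ /=.
apply: (@leq_trans ((2 * j + 3) * gN m j.+1)); last exact: leq_addr.
by rewrite leq_mul2r; apply/orP; right; lia.
Qed.
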